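(* Let $R$ be a noetherian integral domain, $n\ge1$, and $R[n]=R[t]/(t^n)$. Let $p\ge1$ and, for $1\le i\le p$, let $x_i=\sum_{j=0}^{n-1}x_{i,j}t^j\in R[n]$ with $x_{i,j}\in R$. Let $I$ be the ideal of $R[n]$ generated by $x_1,\ldots,x_p$ and $I_0$ the ideal of $R$ generated by $x_{1,0},\ldots,x_{p,0}$. Then: (i) $(x_1,\ldots,x_p)$ is a regular sequence in $R[n]$ if and only if $(x_{1,0},\ldots,x_{p,0})$ is a regular sequence in $R$; (ii) if $(x_1,\ldots,x_p)$ is a regular sequence in $R[n]$, then for every $y\in R$, $t^{n-1}y\in I$ if and only if $y\in I_0$. *)

(* Defs.v *)
From HB Require Import structures.
From mathcomp Require Import all_boot all_order all_algebra.
Set Implicit Arguments. Unset Strict Implicit. Unset Printing Implicit Defensive.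
Import GRing.Theory.
Local Open Scope ring_scope.

Definition ideal_gen (A : comNzRingType) (s : seq A) (y : A) : Prop :=
  exists c : seq A, y = \sum_(i < size s) c`_i * s`_i.

Definition is_ideal (A : comNzRingType) (I : A -> Prop) : Prop :=
  [/\ I 0, (forall x y, I x -> I y -> I (x + y)) & (forall a x, I x -> I (a * x))].

Definition noetherian (A : comNzRingType) : Prop :=
  forall I : A -> Prop, is_ideal I ->
    exists s : seq A, forall y, I y <-> ideal_gen s y.

(* (s_0, ..., s_{p-1}) is a regular sequence in A (as an A-module):
   each s_k is a nonzerodivisor on A/(s_0,...,s_{k-1}), and A/(s) <> 0. *)
Definition regular_seq (A : comNzRingType) (s : seq A) : Prop :=
  (forall k : nat, (k < size s)%N -> forall a : A,
      ideal_gen (take k s) (a * s`_k) -> ideal_gen (take k s) a)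
  /\ ~ ideal_gen s 1.

(* R[n] = R[t]/(t^n), realised as MathComp's quotient polynomial ring
   {poly %/ 'X^n} (which is R[t]/(t^n) whenever n >= 1). *)
Definition Rn (R : comNzRingType) (n : nat) := {poly %/ ('X^n : {poly R})}.

Definition toRn (R : comNzRingType) (n : nat) (q : {poly R}) : Rn R n :=
  in_qpoly ('X^n : {poly R}) q.

(* Main.v *)
Require Import Defs.
From HB Require Import structures.
From mathcomp Require Import all_boot all_order all_algebra.
From mathcomp Require Import ring.
Import GRing.Theory.
Set Implicit Arguments. Unset Strict Implicit.
Local Open Scope ring_scope.

Section Bridge.
Variable R : idomainType.
Variable n : nat.
Hypothesis n0 : (0 < n)%N.

Lemma mkXn : mk_monic ('X^n : {poly R}) = 'X^n.
Proof. by rewrite mk_monic_Xn prednK. Qed.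

Lemma toRn_surj (a : Rn R n) : toRn n (val a) = a.
Proof. by apply: val_inj; exact: in_qpoly_small (size_mk_monic a). Qed.

Lemma toRn_ker (a : {poly R}) : toRn n a = 0 <-> exists e, a = 'X^n * e.
Proof.
split.
- move=> H; have := congr1 val H => /= H2.
  have := Pdiv.RingMonic.rdivp_eq (monic_mk_monic ('X^n : {poly R})) a.
  rewrite H2 addr0 !mk_monic_Xn prednK // => ->; exists (Pdiv.CommonRing.rdivp a 'X^n).
  by rewrite mulrC.
- move=> [e ->]; apply: val_inj => /=.
  by rewrite mk_monic_Xn prednK // mulrC Pdiv.RingMonic.rmodp_mull ?monicXn.
Qed.

Lemma toRn_eq (a b : {poly R}) : toRn n a = toRn n b <-> exists e, a = b + 'X^n * e.
Proof.
split.
- move=> H; have : toRn n (a - b) = 0 by rewrite /toRn in H *; rewrite raddfB /= H subrr.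
  by move/toRn_ker=> [e He]; exists e; rewrite -He; ring.
- move=> [e ->]; rewrite /toRn raddfD /=.
  have -> : in_qpoly 'X^n ('X^n * e) = 0 by apply/toRn_ker; exists e.
  by rewrite addr0.
Qed.
End Bridge.
Section Poly.
Variable R : idomainType.
Variable n : nat.
Hypothesis n0 : (0 < n)%N.
Variable x : nat -> nat -> R.

Definition Xp (i : nat) : {poly R} := \sum_(j < n) x i j *: 'X^j.

Lemma Xp0 i : (Xp i)`_0 = x i 0.
Proof.
rewrite /Xp coef_sum; case: n n0 => // n' _.
rewrite big_ord_recl /= coefZ coefXn eqxx mulr1 big1 ?addr0 // => j _.
by rewrite coefZ coefXn /= mulr0.
Qed.

Definition P m k a := exists (c : nat -> {poly R}) (e : {poly R}),
  a = \sum_(i < k) c i * Xp i + 'X^m * e.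
Definition Q k y := exists d : nat -> R, y = \sum_(i < k) d i * x i 0.

Lemma P_add m k a b : P m k a -> P m k b -> P m k (a + b).
Proof.
move=> [c [e ->]] [c' [e' ->]]; exists (fun i => c i + c' i), (e + e').
have -> : \sum_(i < k) (c i + c' i) * Xp i =
  \sum_(i < k) c i * Xp i + \sum_(i < k) c' i * Xp i.
  by rewrite -big_split; apply: eq_bigr => i _; rewrite mulrDl.
ring.
Qed.

Lemma P_mull m k u a : P m k a -> P m k (u * a).
Proof.
move=> [c [e ->]]; exists (fun i => u * c i), (u * e).
rewrite mulrDr mulr_sumr; under eq_bigr do rewrite mulrA.
by rewrite mulrCA.
Qed.

Lemma P_Xn m k u : P m k ('X^m * u).
Proof. by exists (fun _ => 0), u; rewrite big1 ?add0r // => i _; rewrite mul0r. Qed.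

Lemma P_sum m k (c : nat -> {poly R}) : P m k (\sum_(i < k) c i * Xp i).
Proof. by exists c, 0; rewrite mulr0 addr0. Qed.

Lemma P_monok m k k' a : (k <= k')%N -> P m k a -> P m k' a.
Proof.
move=> kk [c [e ->]]; exists (fun i => if (i < k)%N then c i else 0), e.
rewrite (big_ord_widen k' (fun i => c i * Xp i) kk) big_mkcond /=.
congr (_ + _); apply: eq_bigr => i _; by case: ifP; rewrite ?mul0r.
Qed.

Lemma P_gen m k i : (i < k)%N -> P m k (Xp i).
Proof.
move=> ik; apply: (@P_monok m i.+1 k _ ik).
exists (fun j => if j == i then 1 else 0), 0.
rewrite mulr0 addr0 big_ord_recr /= eqxx mul1r big1 ?add0r // => j _.
by rewrite (ltn_eqF (ltn_ord j)) mul0r.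
Qed.

Lemma Q_add k a b : Q k a -> Q k b -> Q k (a + b).
Proof.
move=> [c ->] [c' ->]; exists (fun i => c i + c' i).
rewrite -big_split /=; apply: eq_bigr => i _; ring.
Qed.

Lemma Q_mull k u a : Q k a -> Q k (u * a).
Proof.
move=> [c ->]; exists (fun i => u * c i); rewrite mulr_sumr.
by apply: eq_bigr => i _; rewrite mulrA.
Qed.

Lemma coef0_sum k (c : nat -> {poly R}) :
  (\sum_(i < k) c i * Xp i)`_0 = \sum_(i < k) (c i)`_0 * x i 0.
Proof. by rewrite coef_sum; apply: eq_bigr => i _; rewrite coef0M Xp0. Qed.

Lemma Q_coef0 m k a : (0 < m)%N -> P m k a -> Q k a`_0.
Proof.
move=> m0 [c [e ->]]; exists (fun i => (c i)`_0).
by rewrite coefD coef0_sum coefXnM m0 addr0.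
Qed.

Lemma Q_lift k (g : {poly R}) : Q k g`_0 -> exists b e, (forall m, P m k b) /\ g = b + 'X * e.
Proof.
move=> [d Hd]; exists (\sum_(i < k) (d i)%:P * Xp i).
have : root (g - \sum_(i < k) (d i)%:P * Xp i) 0.
  rewrite /root horner_coef0 coefB (coef0_sum _ (fun i => (d i)%:P)) Hd.
  have E : \sum_(i < k) ((d i)%:P)`_0 * x i 0 = \sum_(i < k) d i * x i 0.
    by apply: eq_bigr => i _; rewrite coefC.
  by rewrite E subrr.
move/factor_theorem=> [q Hq]; exists q; split; first by move=> m; exact: (P_sum m k (fun i => (d i)%:P)).
rewrite subr0 in Hq; rewrite mulrC -Hq; ring.
Qed.


Lemma P_shift m k f : P m k f -> P m.+1 k ('X * f).
Proof.
move=> [c [e ->]]; exists (fun i => 'X * c i), e.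
rewrite mulrDr mulr_sumr exprS -mulrA; congr (_ + _).
by apply: eq_bigr => i _; rewrite mulrA.
Qed.

Definition W0 K := forall k y, (k < K)%N -> Q k (y * x k 0) -> Q k y.

Lemma L K : W0 K -> forall k, (k <= K)%N -> forall m a, P m.+1 k ('X * a) -> P m k a.
Proof.
move=> hW; elim=> [|k IH] kK m a.
- move=> [c [e He]]; rewrite big_ord0 add0r exprS -mulrA in He.
  exists c, e; rewrite big_ord0 add0r.
  have hX : ('X : {poly R}) != 0 by rewrite polyX_eq0.
  exact: (mulfI hX He).
- move=> [c [e He]].
  have H0 := congr1 (fun q : {poly R} => q`_0) He.
  rewrite /= coefXM eqxx !coefD coefXnM /= addr0 big_ord_recr /= coefD coef0_sum in H0.
  rewrite coef0M Xp0 in H0.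
  have Hq : Q k ((c k)`_0 * x k 0).
    have -> : (c k)`_0 * x k 0 = -1 * \sum_(i < k) (c i)`_0 * x i 0.
      by apply/eqP; rewrite mulN1r -addr_eq0 addrC -H0.
    by apply: Q_mull; exists (fun i => (c i)`_0).
  have := hW k _ kK Hq.
  move/Q_lift => [b [e' [Pb Hck]]].
  rewrite big_ord_recr /= in He.
  have : P m.+1 k ('X * (a - e' * Xp k)).
    have -> : 'X * (a - e' * Xp k) =
       (\sum_(i < k) c i * Xp i) + Xp k * b + 'X^(m.+1) * e.
      by rewrite mulrBr He Hck; ring.
    apply: P_add; last exact: P_Xn.
    apply: P_add; first exact: P_sum.
    exact: P_mull.
  move/(IH (ltnW kK)) => Ha'.
  have -> : a = (a - e' * Xp k) + e' * Xp k by ring.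
  apply: P_add; first exact: (@P_monok m k k.+1 _ (leqnSn k)).
  by apply: P_mull; apply: P_gen.
Qed.

Lemma Liter K : W0 K -> forall k, (k <= K)%N ->
  forall j m a, P (j + m) k ('X^j * a) -> P m k a.
Proof.
move=> hW k kK; elim=> [|j IH] m a.
- by rewrite expr0 mul1r add0n.
- rewrite exprSr -mulrA addSnnS => /IH.
  exact: (L hW kK).
Qed.

Lemma B K : W0 K -> forall m k a, (k < K)%N -> P m k (a * Xp k) -> P m k a.
Proof.
move=> hW; elim=> [|m IH] k a kK HP.
- exists (fun _ => 0), a; rewrite big1 ?expr0 ?mul1r ?add0r // => i _; exact: mul0r.
- have := Q_coef0 (ltn0Sn m) HP; rewrite coef0M Xp0 => Hq.
  have := hW k _ kK Hq; move/Q_lift => [b [f [Pb Ha]]].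
  have : P m.+1 k ('X * (f * Xp k)).
    have -> : 'X * (f * Xp k) = a * Xp k + (- Xp k) * b by rewrite Ha; ring.
    by apply: P_add => //; apply: P_mull.
  move/(L hW (ltnW kK)) => /(IH _ _ kK) Hf.
  rewrite Ha; apply: P_add => //; exact: P_shift.
Qed.

Lemma one_P p : Q p 1 -> P n p 1.
Proof.
move=> Hq.
have : Q p (1 : {poly R})`_0 by rewrite coef1.
move/Q_lift=> [b [e [Pb He]]].
have Hb : b = 1 - 'X * e by rewrite [in RHS]He addrK.
have H := subrX1 ('X * e) n.
move/eqP: H; rewrite subr_eq => /eqP H.
have -> : (1 : {poly R}) = (\sum_(i < n) ('X * e) ^+ i) * b + ('X * e) ^+ n.
  by rewrite H Hb; ring.
apply: P_add; first exact: P_mull.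
rewrite exprMn; exact: P_Xn.
Qed.

Lemma P_one p : P n p 1 -> Q p 1.
Proof. by move/(Q_coef0 n0); rewrite coef1. Qed.

Lemma W0_of p : (forall k a, (k < p)%N -> P n k (a * Xp k) -> P n k a) ->
  forall K, (K <= p)%N -> W0 K.
Proof.
move=> Hreg; elim=> [|K IH] Kp; first by move=> k y.
have hW := IH (ltnW Kp).
move=> k y; rewrite ltnS leq_eqVlt => /orP [/eqP -> | kK]; last exact: hW.
move=> Hq.
have : Q K ((y%:P * Xp K)`_0) by rewrite coef0M Xp0 coefC.
move/Q_lift => [b [e [Pb He]]].
have : P n K ('X^(n.-1) * y%:P * Xp K).
  have -> : 'X^(n.-1) * y%:P * Xp K = 'X^(n.-1) * b + 'X^n * e.
    by rewrite -mulrA He -{3}(prednK n0) exprS; ring.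
  by apply: P_add; [apply: P_mull | apply: P_Xn].
move/(Hreg K _ Kp).
rewrite -[X in P X](prednK n0) -addn1.
move/(Liter hW (leqnn K)).
by move/(Q_coef0 (ltn0Sn 0)); rewrite coefC.
Qed.

End Poly.
Section Main.
Variable R : idomainType.
Variables n p : nat.
Hypothesis n0 : (0 < n)%N.
Variable x : nat -> nat -> R.

Let xs : seq (Rn R n) := [seq toRn n (\sum_(j < n) x i j *: 'X^j) | i <- iota 0 p].
Let x0s : seq R := [seq x i 0%N | i <- iota 0 p].

Lemma size_xs : size xs = p. Proof. by rewrite size_map size_iota. Qed.
Lemma size_x0s : size x0s = p. Proof. by rewrite size_map size_iota. Qed.

Lemma nth_xs i : (i < p)%N -> xs`_i = toRn n (Xp n x i).
Proof. by move=> ip; rewrite (nth_map 0%N) ?size_iota // nth_iota. Qed.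
Lemma nth_x0s i : (i < p)%N -> x0s`_i = x i 0.
Proof. by move=> ip; rewrite (nth_map 0%N) ?size_iota // nth_iota. Qed.

Lemma sum_conv k (f : nat -> Rn R n) (g : nat -> {poly R}) : (k <= p)%N ->
  (forall i, (i < k)%N -> f i = toRn n (g i)) ->
  \sum_(i < size (take k xs)) f i * (take k xs)`_i = toRn n (\sum_(i < k) g i * Xp n x i).
Proof.
move=> kp Hf; rewrite size_takel ?size_xs // /toRn raddf_sum /=.
apply: eq_bigr => i _; rewrite rmorphM /= nth_take // nth_xs ?(leq_trans _ kp) //.
by rewrite Hf.
Qed.

Lemma bridgeP k a : (k <= p)%N -> ideal_gen (take k xs) (toRn n a) <-> P n x n k a.
Proof.
move=> kp; split.
- move=> [c Hc]; rewrite (@sum_conv k (fun i => c`_i) (fun i => val c`_i)) // in Hc.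
    move/(toRn_eq n0): Hc => [e He]; by exists (fun i => val c`_i), e.
  by move=> i _; rewrite toRn_surj.
- move=> [c [e He]]; exists [seq toRn n (c i) | i <- iota 0 k].
  rewrite (@sum_conv k _ c) //.
    by apply/(toRn_eq n0); exists e.
  by move=> i ik; rewrite (nth_map 0%N) ?size_iota // nth_iota.
Qed.

Lemma bridgeQ k y : (k <= p)%N -> ideal_gen (take k x0s) y <-> Q x k y.
Proof.
move=> kp; rewrite /ideal_gen size_takel ?size_x0s //.
have E : forall (d : nat -> R), \sum_(i < k) d i * (take k x0s)`_i = \sum_(i < k) d i * x i 0.
  move=> d; apply: eq_bigr => i _.
  by rewrite nth_take // nth_x0s // (leq_trans _ kp).
split.
- by move=> [c Hc]; exists (fun i => c`_i); rewrite Hc E.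
- move=> [d Hd]; exists [seq d i | i <- iota 0 k]; rewrite Hd.
  have E2 : \sum_(i < k) [seq d i | i <- iota 0 k]`_i * (take k x0s)`_i
          = \sum_(i < k) d i * (take k x0s)`_i.
    apply: eq_bigr => i _.
    by rewrite (nth_map 0%N) ?size_iota // nth_iota.
  by rewrite E2 E.
Qed.

Definition Preg := forall k a, (k < p)%N -> P n x n k (a * Xp n x k) -> P n x n k a.

Lemma regxs : regular_seq xs <-> Preg /\ ~ P n x n p 1.
Proof.
have Hxs : xs = take p xs by rewrite -{1}(take_size xs) size_xs.
have H1 : (1 : Rn R n) = toRn n 1 by rewrite /toRn rmorph1.
split.
- move=> [Hr Hn]; split.
    move=> k a kp HP; apply/(bridgeP _ (ltnW kp)).
    have kp' : (k < size xs)%N by rewrite size_xs.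
    have := Hr k kp' (toRn n a).
    rewrite nth_xs // /toRn -rmorphM; apply.
    exact/(bridgeP _ (ltnW kp)).
  move=> HP; apply: Hn; rewrite Hxs H1; exact/(bridgeP _ (leqnn p)).
- move=> [Hr Hn]; split.
    move=> k; rewrite size_xs => kp a; rewrite -(toRn_surj a) nth_xs // /toRn -rmorphM.
    move/(bridgeP _ (ltnW kp)) => HP; apply/(bridgeP _ (ltnW kp)); exact: Hr.
  rewrite Hxs H1 => /(bridgeP _ (leqnn p)); exact: Hn.
Qed.

Lemma regx0s : regular_seq x0s <-> W0 x p /\ ~ Q x p 1.
Proof.
have Hxs : x0s = take p x0s by rewrite -{1}(take_size x0s) size_x0s.
split.
- move=> [Hr Hn]; split.
    move=> k y kp HQ; apply/(bridgeQ _ (ltnW kp)).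
    have kp' : (k < size x0s)%N by rewrite size_x0s.
    have := Hr k kp' y.
    rewrite nth_x0s //; apply.
    exact/(bridgeQ _ (ltnW kp)).
  move=> HQ; apply: Hn; rewrite Hxs; exact/(bridgeQ _ (leqnn p)).
- move=> [Hr Hn]; split.
    move=> k; rewrite size_x0s => kp a; rewrite nth_x0s //.
    move/(bridgeQ _ (ltnW kp)) => HQ; apply/(bridgeQ _ (ltnW kp)); exact: Hr.
  rewrite Hxs => /(bridgeQ _ (leqnn p)); exact: Hn.
Qed.

Lemma main_i : regular_seq xs <-> regular_seq x0s.
Proof.
rewrite regxs regx0s; split.
- move=> [Hr Hn]; split; first exact: (W0_of n0 Hr (leqnn p)).
  by move=> /(one_P n0).
- move=> [hW Hn]; split.
    move=> k a kp; exact: (B n0 hW).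
  by move=> /(P_one n0).
Qed.

Lemma main_ii : regular_seq xs -> forall y : R,
     ideal_gen xs (toRn n 'X ^+ n.-1 * toRn n y%:P) <-> ideal_gen x0s y.
Proof.
move=> /main_i /regx0s [hW _] y.
have Hxs : xs = take p xs by rewrite -{1}(take_size xs) size_xs.
have Hx0s : x0s = take p x0s by rewrite -{1}(take_size x0s) size_x0s.
rewrite Hxs Hx0s /toRn -rmorphXn -rmorphM -/(toRn n _).
rewrite (bridgeP _ (leqnn p)) (bridgeQ _ (leqnn p)).
split.
- rewrite -[X in P _ _ X](prednK n0) -addn1.
  move/(Liter n0 hW (leqnn p)).
  by move/(Q_coef0 n0 (ltn0Sn 0)); rewrite coefC.
- move=> Hq.
  have : Q x p (y%:P : {poly R})`_0 by rewrite coefC.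
  move/(Q_lift n0) => [b [e [Pb He]]].
  have -> : 'X^(n.-1) * y%:P = 'X^(n.-1) * b + 'X^n * e.
    by rewrite He -{3}(prednK n0) exprS; ring.
  by apply: P_add; [apply: P_mull | apply: P_Xn].
Qed.
End Main.

Theorem proposition3p7p1 (R : idomainType) (n p : nat) (x : nat -> nat -> R) :
  noetherian R -> (0 < n)%N -> (0 < p)%N ->
  let xs : seq (Rn R n) :=
    [seq toRn n (\sum_(j < n) x i j *: 'X^j) | i <- iota 0 p] in
  let x0s : seq R := [seq x i 0%N | i <- iota 0 p] in
  (regular_seq xs <-> regular_seq x0s) /\
  (regular_seq xs -> forall y : R,
     ideal_gen xs (toRn n 'X ^+ n.-1 * toRn n y%:P) <-> ideal_gen x0s y).
Proof.
move=> _ n0 _ xs x0s; split.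
- exact: (main_i p n0 x).
- exact: (main_ii n0).
Qed.
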